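(* Let $a,b,c\in\mathbb{C}$ with $a\neq0$, $\Re(b)>0$, $\Re(b+a+c)>0$, $\Re(b+a-c)>0$, $\Re(b-a+c)>0$, $\Re(b-a-c)>0$, and $\frac{a+c}{b},\frac{a-c}{b}\notin\{\pm1,\pm3,\pm5,\dots\}$. Fix a square root $\sqrt{a^2-c^2}$, put $\mu=\frac{\sqrt{a^2-c^2}}{2b}$, $\tau_1=\frac12-\frac{a+c}{2b}$, $\tau_2=\frac12-\frac{a-c}{2b}$, $\tau_3=\frac12+\frac{a+c}{2b}$, $\tau_4=\frac12+\frac{a-c}{2b}$, and $Q=(b-a-c)(b+a+c)(b-a+c)(b+a-c)$. Assume $\frac12\pm\mu\notin\mathbb{Z}_0^-$ and $1+\tau_j\notin\mathbb{Z}_0^-$ ($j=1,\dots,4$). Then $$ {}_7F_6\!\left(\begin{matrix}1,\ \frac32-\mu,\ \frac32+\mu,\ \tau_1,\ \tau_2,\ \tau_3,\ \tau_4\\ \frac12-\mu,\ \frac12+\mu,\ 1+\tau_1,\ 1+\tau_2,\ 1+\tau_3,\ 1+\tau_4\end{matrix};\,-1\right) =\frac{\pi Q}{2\,(ab^3-a^3b+abc^2)}\cdot\frac{\cos\!\big(\frac{a\pi}{2b}\big)\cos\!\big(\frac{c\pi}{2b}\big)}{\cos\!\big(\frac{c\pi}{b}\big)+\cos\!\big(\frac{a\pi}{b}\big)} -\frac{Q}{4\,(ab^3-a^3b+abc^2)}\left[\beta\!\left(\frac{a+b+c}{2b}\right)+\beta\!\left(\frac{a+b-c}{2b}\right)\right].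 $$
   Context: $\mathbb{Z}_0^-=\{0,-1,-2,\dots\}$. The Pochhammer symbol is $(\lambda)_0=1$, $(\lambda)_n=\lambda(\lambda+1)\cdots(\lambda+n-1)$ for $n\ge1$. The generalized hypergeometric series is ${}_pF_q\!\left(\begin{matrix}\alpha_1,\dots,\alpha_p\\ \beta_1,\dots,\beta_q\end{matrix};z\right)=\sum_{n=0}^\infty\frac{(\alpha_1)_n\cdots(\alpha_p)_n}{(\beta_1)_n\cdots(\beta_q)_n}\frac{z^n}{n!}$ (with no $\beta_j\in\mathbb{Z}_0^-$). The (lower case) beta function of one variable is $\beta(x)=\sum_{k=0}^\infty\frac{(-1)^k}{k+x}$ for $x\in\mathbb{C}\setminus\mathbb{Z}_0^-$. *)

(* Defs.v *)
From Stdlib Require Import Reals List.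
Open Scope R_scope.

Record Cplx : Type := mkC { Re : R ; Im : R }.

Definition RtoC (r : R) : Cplx := mkC r 0.
Definition Cnat (n : nat) : Cplx := RtoC (INR n).
Definition Czero : Cplx := RtoC 0.
Definition Cone : Cplx := RtoC 1.
Definition Ci : Cplx := mkC 0 1.
Definition Cadd (z w : Cplx) : Cplx := mkC (Re z + Re w) (Im z + Im w).
Definition Copp (z : Cplx) : Cplx := mkC (- Re z) (- Im z).
Definition Csub (z w : Cplx) : Cplx := Cadd z (Copp w).
Definition Cmul (z w : Cplx) : Cplx :=
  mkC (Re z * Re w - Im z * Im w) (Re z * Im w + Im z * Re w).
(* multiplicative inverse; (0)^-1 = 0 by convention (never used here) *)
Definition Cinv (z : Cplx) : Cplx :=
  let d := Re z * Re z + Im z * Im z in mkC (Re z / d) (- Im z / d).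
Definition Cdiv (z w : Cplx) : Cplx := Cmul z (Cinv w).
Fixpoint Cpow (z : Cplx) (n : nat) : Cplx :=
  match n with O => Cone | S m => Cmul z (Cpow z m) end.

Declare Scope C_scope.
Delimit Scope C_scope with C.
Infix "+" := Cadd : C_scope.
Infix "-" := Csub : C_scope.
Infix "*" := Cmul : C_scope.
Infix "/" := Cdiv : C_scope.
Notation "- z" := (Copp z) : C_scope.
Infix "^" := Cpow : C_scope.

Definition Cexp (z : Cplx) : Cplx :=
  mkC (exp (Re z) * cos (Im z)) (exp (Re z) * sin (Im z)).
Definition Ccos (z : Cplx) : Cplx :=
  Cdiv (Cadd (Cexp (Cmul Ci z)) (Cexp (Copp (Cmul Ci z)))) (RtoC 2).

Fixpoint poch (l : Cplx) (n : nat) : Cplx :=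
  match n with O => Cone | S m => Cmul (poch l m) (Cadd l (Cnat m)) end.

Definition Cprod (l : list Cplx) : Cplx := fold_right Cmul Cone l.

Definition hyp_term (As Bs : list Cplx) (z : Cplx) (n : nat) : Cplx :=
  Cdiv (Cmul (Cprod (map (fun a => poch a n) As)) (Cpow z n))
       (Cmul (Cprod (map (fun b => poch b n) Bs)) (Cnat (Factorial.fact n))).

Fixpoint Cpartial (f : nat -> Cplx) (n : nat) : Cplx :=
  match n with O => f O | S m => Cadd (Cpartial f m) (f n) end.

Definition Cseries_to (f : nat -> Cplx) (l : Cplx) : Prop :=
  Un_cv (fun n => Re (Cpartial f n)) (Re l) /\
  Un_cv (fun n => Im (Cpartial f n)) (Im l).

(* lower-case beta function: beta x = sum_k (-1)^k/(k+x) (as a convergent series) *)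
Definition beta_term (x : Cplx) (k : nat) : Cplx :=
  Cdiv (Cpow (Copp Cone) k) (Cadd (Cnat k) x).

Definition in_Z0m (z : Cplx) : Prop := exists n : nat, z = Copp (Cnat n).

Definition odd_int (z : Cplx) : Prop :=
  exists k : nat, z = Cnat (2 * k + 1) \/ z = Copp (Cnat (2 * k + 1)).

(* Main.v *)
Require Import Defs.
From Stdlib Require Import Reals List Lra Lia Psatz Field ZArith.
From Coquelicot Require Import Rcomplements Rbar Hierarchy Lim_seq Continuity Derive RInt RInt_analysis AutoDerive ElemFct Series.
Import ListNotations.
Open Scope R_scope.

Open Scope R_scope.

Lemma Ceq (z w : Cplx) : Re z = Re w -> Im z = Im w -> z = w.
Proof. destruct z, w; simpl; intros; subst; reflexivity. Qed.

Lemma Cneq0 z : z <> Czero -> Re z * Re z + Im z * Im z <> 0.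
Proof.
  intros H E. apply H. apply Ceq; simpl; nra.
Qed.

Lemma C_ring : ring_theory Czero Cone Cadd Cmul Csub Copp (@eq Cplx).
Proof.
  constructor; intros; apply Ceq; unfold Czero, Cone, RtoC, Cadd, Cmul, Csub, Copp; simpl; ring.
Qed.

Lemma C_field : field_theory Czero Cone Cadd Cmul Csub Copp Cdiv Cinv (@eq Cplx).
Proof.
  constructor.
  - exact C_ring.
  - intro E. assert (H := f_equal Re E). unfold Czero, Cone, RtoC in H; simpl in H. lra.
  - reflexivity.
  - intros z Hz. apply Cneq0 in Hz. apply Ceq; unfold Cinv, Cmul, Cone, RtoC; simpl; field; auto.
Qed.

Add Field Cfield : C_field.


Lemma RtoC2 : RtoC 2 = Cadd Cone Cone. Proof. apply Ceq; simpl; lra. Qed.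
Lemma two_nz : Cadd Cone Cone <> Czero. Proof. intro H; apply (f_equal Re) in H; simpl in H; lra. Qed.

Ltac nz0 := try change (mkC R1 R0) with Cone; try change (mkC R0 R0) with Czero;
  let E := fresh "E" in intro E;
  match goal with
  | H : ?b <> Czero |- False =>
      match type of E with ?a = Czero =>
        apply H; first [ transitivity a; [ring | exact E]
                       | transitivity (Copp a); [ring | rewrite E; ring] ] end
  end.

Ltac nzc := let E := fresh "E" in intro E; apply (f_equal Re) in E; simpl in E; lra.
Ltac nz := first [exact two_nz | nzc | nz0].

Open Scope R_scope.

Ltac rng := simpl; unfold Rdiv; ring.

Definition ch (y : R) := (exp y + exp (- y)) / 2.
Definition sh (y : R) := (exp y - exp (- y)) / 2.
Definition cr p q t := cos (p * t) * ch (q * t).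
Definition ci p q t := - (sin (p * t) * sh (q * t)).
Definition sr p q t := sin (p * t) * ch (q * t).
Definition si p q t := cos (p * t) * sh (q * t).

Definition Nr p q N t := (p * sr p q t - q * si p q t) * cos (N * t) - N * cr p q t * sin (N * t).
Definition Ni p q N t := (p * si p q t + q * sr p q t) * cos (N * t) - N * ci p q t * sin (N * t).

Definition Fr p q N wr wi t := Nr p q N t * wr - Ni p q N t * wi.
Definition Fi p q N wr wi t := Nr p q N t * wi + Ni p q N t * wr.

Lemma Fr_der p q N wr wi t :
  (p*p - q*q - N*N) * wr - (2*p*q) * wi = 1 ->
  (p*p - q*q - N*N) * wi + (2*p*q) * wr = 0 ->
  is_derive (Fr p q N wr wi) t (cr p q t * cos (N * t)).
Proof.
  intros H1 H2.
  apply is_derive_ext with (fun t => Fr p q N wr wi t).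
  { reflexivity. }
  assert (E : forall t, cr p q t * cos (N * t) =
    cos (N * t) * (cr p q t * ((p*p - q*q - N*N) * wr - (2*p*q) * wi)
                 - ci p q t * ((p*p - q*q - N*N) * wi + (2*p*q) * wr))).
  { intros; rewrite H1, H2; ring. }
  rewrite E. unfold Fr, Nr, Ni, cr, ci, sr, si, ch, sh. auto_derive; [exact I|]. rng.
Qed.

Lemma Fi_der p q N wr wi t :
  (p*p - q*q - N*N) * wr - (2*p*q) * wi = 1 ->
  (p*p - q*q - N*N) * wi + (2*p*q) * wr = 0 ->
  is_derive (Fi p q N wr wi) t (ci p q t * cos (N * t)).
Proof.
  intros H1 H2.
  assert (E : forall t, ci p q t * cos (N * t) =
    cos (N * t) * (cr p q t * ((p*p - q*q - N*N) * wi + (2*p*q) * wr)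
                 + ci p q t * ((p*p - q*q - N*N) * wr - (2*p*q) * wi))).
  { intros; rewrite H1, H2; ring. }
  rewrite E. unfold Fi, Nr, Ni, cr, ci, sr, si, ch, sh. auto_derive; [exact I|]. rng.
Qed.

Lemma sin_nPI n : sin (INR n * PI) = 0.
Proof.
  induction n. simpl. rewrite Rmult_0_l; apply sin_0.
  rewrite S_INR, Rmult_plus_distr_r, Rmult_1_l, sin_plus, IHn, sin_PI. ring.
Qed.
Lemma cos_nPI n : cos (INR n * PI) = (-1) ^ n.
Proof.
  induction n. simpl. rewrite Rmult_0_l; apply cos_0.
  rewrite S_INR, Rmult_plus_distr_r, Rmult_1_l, cos_plus, IHn, sin_PI, cos_PI. simpl; ring.
Qed.

Lemma Cpow_m1 n : Cpow (Copp Cone) n = RtoC ((-1) ^ n).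
Proof.
  induction n; simpl. reflexivity. rewrite IHn. apply Ceq; simpl; ring.
Qed.

Definition sx (x : Cplx) := mkC (sr (Re x) (Im x) PI) (si (Re x) (Im x) PI).
Definition Jn (x : Cplx) (n : nat) :=
  Cmul (Cmul (Cmul (Cpow (Copp Cone) n) x) (sx x)) (Cinv (Csub (Cmul x x) (Cmul (Cnat n) (Cnat n)))).

Lemma cont_der (f : R -> R) t : ex_derive f t -> continuous f t.
Proof. apply (@ex_derive_continuous R_AbsRing R_NormedModule). Qed.

Lemma FTC (f df : R -> R) a b :
  (forall x, Rmin a b <= x <= Rmax a b -> is_derive f x (df x)) ->
  (forall x, Rmin a b <= x <= Rmax a b -> continuous df x) ->
  is_RInt df a b (f b - f a).
Proof. intros H1 H2. exact (@is_RInt_derive R_CompleteNormedModule f df a b H1 H2). Qed.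



Open Scope R_scope.
Lemma Jn_int x n : Csub (Cmul x x) (Cmul (Cnat n) (Cnat n)) <> Czero ->
  is_RInt (fun t => cr (Re x) (Im x) t * cos (INR n * t)) 0 PI (Re (Jn x n)) /\
  is_RInt (fun t => ci (Re x) (Im x) t * cos (INR n * t)) 0 PI (Im (Jn x n)).
Proof.
  intros Hz.
  remember (Cinv (Csub (Cmul x x) (Cmul (Cnat n) (Cnat n)))) as w eqn:Hwd.
  assert (Hw : Cmul (Csub (Cmul x x) (Cmul (Cnat n) (Cnat n))) w = Cone).
  { rewrite Hwd. field. exact Hz. }
  destruct x as [p q]; cbn [Re Im].
  assert (H1 : (p*p - q*q - INR n*INR n) * Re w - (2*p*q) * Im w = 1).
  { apply (f_equal Re) in Hw. unfold Cmul, Csub, Cadd, Copp, Cnat, RtoC, Cone in Hw; simpl in Hw.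
    rewrite <- Hw. ring. }
  assert (H2 : (p*p - q*q - INR n*INR n) * Im w + (2*p*q) * Re w = 0).
  { apply (f_equal Im) in Hw. unfold Cmul, Csub, Cadd, Copp, Cnat, RtoC, Cone in Hw; simpl in Hw.
    rewrite <- Hw. ring. }
  assert (Hc : forall (f : R -> R) (v : R), v = f PI - f 0 -> is_RInt (fun t => f t) 0 PI (f PI - f 0) -> is_RInt (fun t => f t) 0 PI v) by (intros; subst; auto).
  split.
  - replace (Re (Jn (mkC p q) n)) with (Fr p q (INR n) (Re w) (Im w) PI - Fr p q (INR n) (Re w) (Im w) 0).
    2:{ unfold Jn. simpl Re in Hwd; simpl Im in Hwd. rewrite <- Hwd. rewrite Cpow_m1. unfold Fr, Nr, Ni, sx, cr, ci, sr, si; simpl.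
        rewrite sin_nPI, cos_nPI, !Rmult_0_r, sin_0, cos_0. unfold sh, ch. rewrite Ropp_0, exp_0. field. }
    apply (FTC (Fr p q (INR n) (Re w) (Im w)) (fun t => cr p q t * cos (INR n * t))).
    + intros; apply Fr_der; auto.
    + intros t _. apply cont_der. unfold cr, ch. auto_derive. exact I.
  - replace (Im (Jn (mkC p q) n)) with (Fi p q (INR n) (Re w) (Im w) PI - Fi p q (INR n) (Re w) (Im w) 0).
    2:{ unfold Jn. simpl Re in Hwd; simpl Im in Hwd. rewrite <- Hwd. rewrite Cpow_m1. unfold Fi, Nr, Ni, sx, cr, ci, sr, si; simpl.
        rewrite sin_nPI, cos_nPI, !Rmult_0_r, sin_0, cos_0. unfold sh, ch. rewrite Ropp_0, exp_0. field. }
    apply (FTC (Fi p q (INR n) (Re w) (Im w))).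
    + intros; apply Fi_der; auto.
    + intros t _. apply cont_der. unfold ci, sh. auto_derive. exact I.
Qed.

Open Scope R_scope.

Fixpoint Dk (k : nat) (t : R) : R :=
  match k with O => 1 | S k' => Dk k' t + 2 * cos (INR (S k') * t) end.
Fixpoint Gk (N : nat) (t : R) : R :=
  match N with O => Dk O t | S N' => Gk N' t + Dk (S N') t end.

Lemma Dk_S k t : Dk (S k) t = Dk k t + 2 * cos (INR (S k) * t).
Proof. reflexivity. Qed.
Lemma Gk_S N t : Gk (S N) t = Gk N t + Dk (S N) t.
Proof. reflexivity. Qed.

Lemma Dk_sin k t : Dk k t * sin (t/2) = sin ((INR k + 1/2) * t).
Proof.
  induction k.
  - simpl. rewrite Rmult_1_l. f_equal; field.
  - rewrite Dk_S. rewrite Rmult_plus_distr_r, IHk, S_INR.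
    replace ((INR k + 1/2) * t) with ((INR k + 1) * t - t/2) by field.
    replace ((INR k + 1 + 1/2) * t) with ((INR k + 1) * t + t/2) by field.
    rewrite sin_minus, sin_plus. ring.
Qed.

Lemma Gk_sin N t : Gk N t * (sin (t/2) * sin (t/2)) = (1 - cos ((INR N + 1) * t)) / 2.
Proof.
  induction N.
  - change (Gk 0 t) with 1. replace ((INR 0 + 1) * t) with (t/2 + t/2) by (simpl; field). rewrite cos_plus.
    pose proof (sin2_cos2 (t/2)). unfold Rsqr in H. lra.
  - rewrite Gk_S. rewrite Rmult_plus_distr_r, IHN, <- Rmult_assoc, Dk_sin, S_INR.
    replace ((INR N + 1 + 1/2) * t) with ((INR N + 1) * t + t/2) by field.
    replace ((INR N + 1 + 1) * t) with ((INR N + 1) * t + t/2 + t/2) by field.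
    rewrite !cos_plus, sin_plus. 
    pose proof (sin2_cos2 (t/2)). unfold Rsqr in H.
    replace (cos (t/2+t/2)) with (cos (t/2) * cos (t/2) - sin (t/2) * sin (t/2)) by (rewrite cos_plus; ring).
    replace (sin (t/2+t/2)) with (2 * sin (t/2) * cos (t/2)) by (rewrite sin_plus; ring).
    assert (E : cos ((INR N + 1) * t) * (sin (t/2) * sin (t/2) + cos (t/2) * cos (t/2)) = cos ((INR N + 1) * t)) by (rewrite H; ring). lra.
Qed.

Lemma Dk_0 k : Dk k 0 = 2 * INR k + 1.
Proof. induction k. simpl; ring. rewrite Dk_S, IHk, Rmult_0_r, cos_0, S_INR. ring. Qed.

Lemma Gk_nonneg N t : 0 <= t <= PI -> 0 <= Gk N t.
Proof.
  intros Ht. destruct (Req_dec t 0) as [->|Ht0].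
  - induction N. change (Gk 0 0) with 1; lra. rewrite Gk_S.
    rewrite Dk_0. pose proof (pos_INR (S N)). lra.
  - assert (Hs : 0 < sin (t/2)) by (apply sin_gt_0; lra).
    pose proof (Gk_sin N t). pose proof (COS_bound ((INR N + 1) * t)).
    assert (0 <= Gk N t * (sin (t/2) * sin (t/2))) by lra.
    assert (0 < sin (t/2) * sin (t/2)) by nra. nra.
Qed.

Lemma Gk_bound N t : 0 < t <= PI -> Gk N t * (sin (t/2) * sin (t/2)) <= 1.
Proof. intros. rewrite Gk_sin. pose proof (COS_bound ((INR N + 1) * t)). lra. Qed.

Lemma FTC' (f df : R -> R) a b v :
  (forall x, Rmin a b <= x <= Rmax a b -> is_derive f x (df x)) ->
  (forall x, Rmin a b <= x <= Rmax a b -> continuous df x) ->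
  f b - f a = v -> is_RInt df a b v.
Proof. intros H1 H2 <-. apply FTC; auto. Qed.

Lemma is_RInt_eqv (f : R -> R) a b v w : is_RInt f a b v -> v = w -> is_RInt f a b w.
Proof. intros H <-; exact H. Qed.

Lemma int_cos m : (0 < m)%nat -> is_RInt (fun t => cos (INR m * t)) 0 PI 0.
Proof.
  intros Hm. assert (HmR : 0 < INR m) by (apply lt_0_INR; lia).
  apply (FTC' (fun t => sin (INR m * t) / INR m)).
  3:{ simpl. rewrite sin_nPI, Rmult_0_r, sin_0. field. lra. }
  - intros. auto_derive; [exact I|]. simpl; field. lra.
  - intros. apply cont_der. auto_derive. exact I.
Qed.

Lemma int_Dk k : is_RInt (Dk k) 0 PI PI.
Proof.
  induction k.
  - apply (is_RInt_ext (fun _ => 1)). { intros; reflexivity. }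
    eapply is_RInt_eqv. apply is_RInt_const. unfold scal. simpl. unfold mult. simpl. ring.
  - pose proof (is_RInt_plus _ _ _ _ _ _ IHk (is_RInt_scal _ _ _ 2 _ (int_cos (S k) ltac:(lia)))) as H.
    apply (is_RInt_ext _ (Dk (S k))) in H. 2:{ intros; rewrite Dk_S; reflexivity. }
    eapply is_RInt_eqv. exact H. change (PI + 2 * 0 = PI). ring.
Qed.

Lemma int_Gk N : is_RInt (Gk N) 0 PI ((INR N + 1) * PI).
Proof.
  induction N.
  - change (Gk 0) with (Dk 0). replace ((INR 0+1)*PI) with PI by (simpl; ring). apply int_Dk.
  - pose proof (is_RInt_plus _ _ _ _ _ _ IHN (int_Dk (S N))) as H.
    apply (is_RInt_ext _ (Gk (S N))) in H. 2:{ intros; rewrite Gk_S; reflexivity. }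
    eapply is_RInt_eqv. exact H. rewrite S_INR. change ((INR N + 1) * PI + PI = (INR N + 1 + 1) * PI). ring.
Qed.

Open Scope R_scope.

Lemma Dk_exd k t : ex_derive (Dk k) t.
Proof.
  induction k.
  - apply (ex_derive_ext (fun _ => 1)). reflexivity. apply ex_derive_const.
  - apply (ex_derive_ext (fun t => Dk k t + 2 * cos (INR (S k) * t))). intros; symmetry; apply Dk_S.
    apply (ex_derive_plus (Dk k) (fun t => 2 * cos (INR (S k) * t))). exact IHk. auto_derive. exact I.
Qed.
Lemma Gk_exd N t : ex_derive (Gk N) t.
Proof.
  induction N.
  - apply Dk_exd.
  - apply (ex_derive_ext (fun t => Gk N t + Dk (S N) t)). intros; symmetry; apply Gk_S.
    apply (ex_derive_plus (Gk N) (Dk (S N))). exact IHN. apply Dk_exd.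
Qed.
Lemma Gk_cont N t : continuous (Gk N) t.
Proof. apply cont_der, Gk_exd. Qed.

Lemma exR (f : R -> R) a b : (forall z, Rmin a b <= z <= Rmax a b -> continuous f z) -> ex_RInt f a b.
Proof. apply (@ex_RInt_continuous R_CompleteNormedModule). Qed.

Lemma cont_bound (g : R -> R) : (forall t, 0 <= t <= PI -> continuous g t) ->
  exists B, 0 <= B /\ forall t, 0 <= t <= PI -> Rabs (g t) <= B.
Proof.
  intros Hg.
  destruct (continuity_ab_maj (fun t => Rabs (g t)) 0 PI) as [M [HM1 HM2]].
  { pose proof PI_RGT_0; lra. }
  { intros c Hc. apply continuity_pt_filterlim. apply continuous_Rabs_comp. apply Hg; auto. }
  exists (Rabs (g M)). split. apply Rabs_pos. exact HM1.
Qed.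

Lemma sin_half_mono d t : 0 < d <= t -> t <= PI -> sin (d/2) <= sin (t/2).
Proof.
  intros. destruct (Req_dec d t). subst; lra.
  left. apply sin_increasing_1; pose proof PI_RGT_0; lra.
Qed.

Lemma fejer (g : R -> R) : (forall t, 0 <= t <= PI -> continuous g t) -> g 0 = 0 ->
  Un_cv (fun N => RInt (fun t => g t * Gk N t) 0 PI / (INR N + 1)) 0.
Proof.
  intros Hg H0 eps Heps.
  pose proof PI_RGT_0 as HPI.
  destruct (cont_bound g Hg) as [B [HB HBb]].
  set (e1 := eps / (2 * PI)).
  assert (He1 : 0 < e1) by (unfold e1; apply Rdiv_lt_0_compat; lra).
  assert (Hc0 : continuity_pt g 0) by (apply continuity_pt_filterlim, Hg; lra).
  destruct (Hc0 e1 He1) as [alp [Halp Hc]].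
  set (d := Rmin (alp/2) PI).
  assert (Hd : 0 < d <= PI) by (unfold d; split; [apply Rmin_glb_lt; lra | apply Rmin_r]).
  assert (Hdalp : d < alp) by (unfold d; pose proof (Rmin_l (alp/2) PI); lra).
  assert (Hsd : 0 < sin (d/2)) by (apply sin_gt_0; lra).
  set (C := B / (sin (d/2) * sin (d/2))).
  assert (HC : 0 <= C) by (unfold C; apply Rdiv_le_0_compat; nra).
  assert (Hpt : forall N t, 0 <= t <= PI -> Rabs (g t * Gk N t) <= e1 * Gk N t + C).
  { intros N t Ht. pose proof (Gk_nonneg N t Ht) as HG.
    rewrite Rabs_mult, (Rabs_pos_eq (Gk N t) HG).
    destruct (Rle_lt_dec t d) as [Htd|Htd].
    - assert (Rabs (g t) <= e1).
      { destruct (Req_dec t 0) as [->|Ht0]. rewrite H0, Rabs_R0; lra.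
        left. specialize (Hc t). simpl in Hc. unfold R_dist in Hc. rewrite H0, !Rminus_0_r in Hc. apply Hc.
        split. split. exact I. auto. rewrite Rabs_pos_eq; lra. }
      assert (Rabs (g t) * Gk N t <= e1 * Gk N t) by (apply Rmult_le_compat_r; auto).
      lra.
    - assert (Hst : sin (d/2) <= sin (t/2)) by (apply sin_half_mono; lra).
      pose proof (Gk_bound N t ltac:(lra)) as Hb.
      assert (HGC : Gk N t <= 1 / (sin (d/2) * sin (d/2))).
      { apply (Rmult_le_reg_r (sin (d/2) * sin (d/2))). nra.
        unfold Rdiv. rewrite Rmult_1_l, Rinv_l by nra.
        assert (Gk N t * (sin (d / 2) * sin (d / 2)) <= Gk N t * (sin (t / 2) * sin (t / 2))).
        { apply Rmult_le_compat_l; auto. nra. }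
        lra. }
      assert (Rabs (g t) * Gk N t <= B * (1 / (sin (d/2) * sin (d/2)))).
      { apply Rmult_le_compat; auto. apply Rabs_pos. }
      assert (0 <= e1 * Gk N t) by nra.
      unfold C. unfold Rdiv in *. lra. }
  assert (Hex : forall N, ex_RInt (fun t => g t * Gk N t) 0 PI).
  { intros N. apply exR. intros z Hz. rewrite Rmin_left, Rmax_right in Hz by lra.
    apply (continuous_mult g (Gk N)). apply Hg; auto. apply Gk_cont. }
  assert (Hexa : forall N, ex_RInt (fun t => Rabs (g t * Gk N t)) 0 PI).
  { intros N. apply exR. intros z Hz. rewrite Rmin_left, Rmax_right in Hz by lra.
    apply continuous_Rabs_comp. apply (continuous_mult g (Gk N)). apply Hg; auto. apply Gk_cont. }
  assert (Hint : forall N, is_RInt (fun t => e1 * Gk N t + C) 0 PI (e1 * ((INR N + 1) * PI) + PI * C)).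
  { intros N. pose proof (is_RInt_plus _ _ _ _ _ _ (is_RInt_scal _ _ _ e1 _ (int_Gk N)) (is_RInt_const 0 PI C)) as H.
    eapply is_RInt_eqv. apply (is_RInt_ext _ _ _ _ _ (fun x _ => eq_refl)) in H. exact H.
    change (e1 * ((INR N + 1) * PI) + (PI - 0) * C = e1 * ((INR N + 1) * PI) + PI * C). ring. }
  assert (Hq : 0 < eps / (2 * (PI * C + 1))) by (apply Rdiv_lt_0_compat; nra).
  destruct (archimed_cor1 _ Hq) as [N0 [HN0 HN0p]].
  exists N0. intros n Hn. unfold R_dist. rewrite Rminus_0_r.
  assert (Hn1 : INR N0 <= INR n) by (apply le_INR; lia).
  assert (HN0r : 0 < INR N0) by (apply lt_0_INR; lia).
  set (I := RInt (fun t => g t * Gk n t) 0 PI).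
  assert (HI : Rabs I <= e1 * ((INR n + 1) * PI) + PI * C).
  { eapply Rle_trans. apply abs_RInt_le. lra. apply Hex.
    rewrite <- (is_RInt_unique _ _ _ _ (Hint n)).
    apply RInt_le. lra. apply Hexa. eexists; apply Hint.
    intros; apply Hpt; lra. }
  assert (Hn1p : 0 < INR n + 1) by lra.
  unfold Rdiv. rewrite Rabs_mult, Rabs_inv, (Rabs_pos_eq (INR n + 1)) by lra.
  apply (Rmult_lt_reg_r (INR n + 1)); auto.
  rewrite Rmult_assoc, Rinv_l, Rmult_1_r by lra.
  eapply Rle_lt_trans. exact HI.
  unfold e1.
  assert (HPC : PI * C < eps / 2 * (INR n + 1)).
  { assert (/ INR N0 * (PI * C + 1) < eps / 2).
    { apply (Rmult_lt_compat_r (PI * C + 1)) in HN0. 2: nra.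
      replace (eps / (2 * (PI * C + 1)) * (PI * C + 1)) with (eps/2) in HN0 by (field; nra). exact HN0. }
    assert (PI * C + 1 < eps / 2 * INR N0).
    { apply (Rmult_lt_compat_r (INR N0)) in H; auto.
      replace (/ INR N0 * (PI * C + 1) * INR N0) with (PI * C + 1) in H by (field; lra). exact H. }
    nra. }
  replace (eps / (2 * PI) * ((INR n + 1) * PI)) with (eps / 2 * (INR n + 1)) by (field; lra).
  nra.
Qed.

Open Scope R_scope.

Definition CUn_cv (s : nat -> Cplx) (l : Cplx) :=
  Un_cv (fun n => Re (s n)) (Re l) /\ Un_cv (fun n => Im (s n)) (Im l).

Lemma Re_Cpartial f N : Re (Cpartial f N) = sum_f_R0 (fun n => Re (f n)) N.
Proof. induction N; simpl; auto. rewrite IHN; reflexivity. Qed.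
Lemma Im_Cpartial f N : Im (Cpartial f N) = sum_f_R0 (fun n => Im (f n)) N.
Proof. induction N; simpl; auto. rewrite IHN; reflexivity. Qed.

Lemma inv_cv0 : Un_cv (fun N => / (INR N + 2)) 0.
Proof.
  intros eps Heps. destruct (archimed_cor1 eps Heps) as [N0 [H1 H2]].
  exists N0. intros n Hn. unfold R_dist. rewrite Rminus_0_r.
  assert (INR N0 <= INR n) by (apply le_INR; lia).
  assert (0 < INR N0) by (apply lt_0_INR; lia).
  rewrite Rabs_pos_eq. 2:{ left; apply Rinv_0_lt_compat; pose proof (pos_INR n); lra. }
  eapply Rle_lt_trans. 2: exact H1. apply Rinv_le_contravar; auto. lra.
Qed.

Lemma tele_sum N : sum_f_R0 (fun k => / ((INR k + 1) * (INR k + 2))) N = 1 - / (INR N + 2).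
Proof.
  induction N. simpl. field.
  rewrite tech5, IHN, S_INR. pose proof (pos_INR N). field. lra.
Qed.

Lemma tele_ex : ex_series (fun k => / ((INR k + 1) * (INR k + 2))).
Proof.
  exists 1. apply is_series_Reals. unfold infinite_sum.
  intros eps Heps. destruct (inv_cv0 eps Heps) as [N0 HN0]. exists N0. intros n Hn.
  rewrite tele_sum. specialize (HN0 n Hn). unfold R_dist in *.
  replace (1 - / (INR n + 2) - 1) with (- (/ (INR n + 2) - 0)) by ring. rewrite Rabs_Ropp. exact HN0.
Qed.

Lemma real_conv (a : nat -> R) K M : (0 < M)%nat ->
  (forall n, (M <= n)%nat -> Rabs (a n) <= K / (INR n * INR n)) ->
  exists l, Un_cv (sum_f_R0 a) l.
Proof.
  intros HM Hb.
  assert (Hex : ex_series a).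
  { apply ex_series_Rabs. apply (ex_series_incr_n _ M).
    apply (@ex_series_le R_AbsRing R_CompleteNormedModule _ (fun k => (2 * Rabs K) * / ((INR k + 1) * (INR k + 2)))).
    - intros k. change (norm (Rabs (a (M + k)%nat))) with (Rabs (Rabs (a (M + k)%nat))).
      rewrite Rabs_Rabsolu. eapply Rle_trans. apply Hb. lia.
      rewrite plus_INR. assert (1 <= INR M) by (apply (le_INR 1); lia).
      pose proof (pos_INR k).
      assert (K / ((INR M + INR k) * (INR M + INR k)) <= Rabs K / ((INR M + INR k) * (INR M + INR k))).
      { unfold Rdiv; apply Rmult_le_compat_r. left; apply Rinv_0_lt_compat; nra. apply RRle_abs. }
      eapply Rle_trans. exact H1. unfold Rdiv. rewrite Rmult_assoc. rewrite (Rmult_comm 2).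
      rewrite Rmult_assoc. apply Rmult_le_compat_l. apply Rabs_pos.
      rewrite <- (Rinv_inv 2). rewrite <- Rinv_mult.
      apply Rinv_le_contravar. nra. nra.
    - apply (@ex_series_scal_l R_AbsRing R_NormedModule (2 * Rabs K) (fun k => / ((INR k + 1) * (INR k + 2)))). apply tele_ex. }
  destruct Hex as [l Hl]. exists l. apply is_series_Reals in Hl. exact Hl.
Qed.

Lemma C_conv (f : nat -> Cplx) K M : (0 < M)%nat ->
  (forall n, (M <= n)%nat -> Rabs (Re (f n)) <= K / (INR n * INR n) /\ Rabs (Im (f n)) <= K / (INR n * INR n)) ->
  exists L, Cseries_to f L.
Proof.
  intros HM Hb.
  destruct (real_conv (fun n => Re (f n)) K M HM) as [l1 H1]. intros; apply Hb; auto.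
  destruct (real_conv (fun n => Im (f n)) K M HM) as [l2 H2]. intros; apply Hb; auto.
  exists (mkC l1 l2). split; simpl.
  - intros e He; destruct (H1 e He) as [N HN]; exists N; intros; rewrite Re_Cpartial; auto.
  - intros e He; destruct (H2 e He) as [N HN]; exists N; intros; rewrite Im_Cpartial; auto.
Qed.

Lemma Cinv_bound w : Re w <> 0 ->
  Rabs (Re (Cinv w)) <= / Rabs (Re w) /\ Rabs (Im (Cinv w)) <= / Rabs (Re w).
Proof.
  destruct w as [a b]; unfold Cinv; simpl; intros Ha.
  assert (Hd : 0 < a * a + b * b) by nra.
  assert (Ha2 : 0 < Rabs a) by (apply Rabs_pos_lt; auto).
  unfold Rdiv. rewrite !Rabs_mult, (Rabs_pos_eq (/ _)) by (left; apply Rinv_0_lt_compat; auto).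
  rewrite Rabs_Ropp. split.
  - apply (Rmult_le_reg_r (Rabs a * (a*a+b*b))). nra.
    replace (Rabs a * / (a * a + b * b) * (Rabs a * (a * a + b * b))) with (Rabs a * Rabs a) by (field; lra).
    replace (/ Rabs a * (Rabs a * (a * a + b * b))) with (a*a+b*b) by (field; lra).
    rewrite <- Rabs_mult, Rabs_pos_eq by nra. nra.
  - apply (Rmult_le_reg_r (Rabs a * (a*a+b*b))). nra.
    replace (Rabs b * / (a * a + b * b) * (Rabs a * (a * a + b * b))) with (Rabs a * Rabs b) by (field; lra).
    replace (/ Rabs a * (Rabs a * (a * a + b * b))) with (a*a+b*b) by (field; lra).
    pose proof (Rabs_pos b). 
    assert (Rabs a * Rabs a = a * a) by (rewrite <- Rabs_mult; apply Rabs_pos_eq; nra).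
    assert (Rabs b * Rabs b = b * b) by (rewrite <- Rabs_mult; apply Rabs_pos_eq; nra).
    nra.
Qed.

Open Scope R_scope.

Definition notZ (x : Cplx) := forall k : Z, x <> RtoC (IZR k).

Definition cterm (x : Cplx) (n : nat) : Cplx :=
  match n with
  | O => Cinv x
  | S _ => Cmul (Cmul (Cpow (Copp Cone) n) (Cmul (RtoC 2) x)) (Cinv (Csub (Cmul x x) (Cmul (Cnat n) (Cnat n))))
  end.

Lemma INR_unb r : exists n : nat, r < INR n.
Proof.
  destruct (archimed r) as [H1 _]. exists (Z.to_nat (up r)).
  destruct (Z_le_gt_dec 0 (up r)).
  - rewrite INR_IZR_INZ, Z2Nat.id; auto.
  - pose proof (pos_INR (Z.to_nat (up r))). apply Z.gt_lt in g. apply IZR_lt in g. lra.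
Qed.

Lemma Cdec (z w : Cplx) : z = w \/ z <> w.
Proof.
  destruct (Req_dec (Re z) (Re w)); destruct (Req_dec (Im z) (Im w)).
  left; apply Ceq; auto.
  all: right; intro E; subst; auto.
Qed.

Lemma Cmul_integral z w : Cmul z w = Czero -> z = Czero \/ w = Czero.
Proof.
  intros H. destruct (Cdec z Czero) as [E|E]. left; auto. right.
  replace w with (Cmul (Cinv z) (Cmul z w)) by (field; auto). rewrite H. field; auto.
Qed.

Lemma Cnat_IZR n : Cnat n = RtoC (IZR (Z.of_nat n)).
Proof. unfold Cnat. rewrite INR_IZR_INZ. reflexivity. Qed.

Lemma notZ_0 x : notZ x -> x <> Czero.
Proof. intros H E. apply (H 0%Z). rewrite E. reflexivity. Qed.

Lemma notZ_sq x n : notZ x -> Csub (Cmul x x) (Cmul (Cnat n) (Cnat n)) <> Czero.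
Proof.
  intros H E.
  assert (E2 : Cmul (Csub x (Cnat n)) (Cadd x (Cnat n)) = Czero) by (rewrite <- E; ring).
  apply Cmul_integral in E2. destruct E2 as [E2|E2].
  - apply (H (Z.of_nat n)). rewrite <- Cnat_IZR.
    replace x with (Cadd (Csub x (Cnat n)) (Cnat n)) by ring. rewrite E2. ring.
  - apply (H (- Z.of_nat n)%Z). rewrite opp_IZR.
    replace x with (Csub (Cadd x (Cnat n)) (Cnat n)) by ring. rewrite E2, Cnat_IZR.
    apply Ceq; simpl; ring.
Qed.

Lemma cterm_sx x n : notZ x ->
  Cmul (cterm x n) (sx x) = match n with O => Jn x O | S _ => Cmul (RtoC 2) (Jn x n) end.
Proof.
  intros H. pose proof (notZ_0 x H). pose proof (notZ_sq x n H).
  destruct n.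
  - unfold cterm, Jn. simpl Cpow.
    assert (Cnat 0 = Czero) by (apply Ceq; simpl; ring). rewrite H2 in *.
    replace (Csub (Cmul x x) (Cmul Czero Czero)) with (Cmul x x) by ring.
    field. auto.
  - unfold cterm, Jn. field. auto.
Qed.

Lemma Re_add z w : Re (Cadd z w) = Re z + Re w. Proof. reflexivity. Qed.
Lemma Im_add z w : Im (Cadd z w) = Im z + Im w. Proof. reflexivity. Qed.
Lemma Re_2mul z : Re (Cmul (RtoC 2) z) = 2 * Re z. Proof. simpl; ring. Qed.
Lemma Im_2mul z : Im (Cmul (RtoC 2) z) = 2 * Im z. Proof. simpl; ring. Qed.

Lemma int_partial x N : notZ x ->
  is_RInt (fun t => cr (Re x) (Im x) t * Dk N t) 0 PI (Re (Cmul (Cpartial (cterm x) N) (sx x))) /\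
  is_RInt (fun t => ci (Re x) (Im x) t * Dk N t) 0 PI (Im (Cmul (Cpartial (cterm x) N) (sx x))).
Proof.
  intros Hx. induction N.
  - change (Cpartial (cterm x) 0) with (cterm x 0). rewrite (cterm_sx x 0 Hx).
    destruct (Jn_int x 0 (notZ_sq x 0 Hx)) as [H1 H2].
    split; (eapply is_RInt_ext; [|eassumption]); intros t _; simpl; rewrite Rmult_0_l, cos_0; reflexivity.
  - destruct IHN as [H1 H2].
    destruct (Jn_int x (S N) (notZ_sq x (S N) Hx)) as [J1 J2].
    assert (E : Cmul (Cpartial (cterm x) (S N)) (sx x) =
      Cadd (Cmul (Cpartial (cterm x) N) (sx x)) (Cmul (RtoC 2) (Jn x (S N)))).
    { change (Cpartial (cterm x) (S N)) with (Cadd (Cpartial (cterm x) N) (cterm x (S N))).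
      rewrite <- (cterm_sx x (S N) Hx). ring. }
    rewrite E, Re_add, Im_add, Re_2mul, Im_2mul. split.
    + pose proof (is_RInt_plus _ _ _ _ _ _ H1 (is_RInt_scal _ _ _ 2 _ J1)) as H.
      eapply is_RInt_ext; [|exact H]. intros t _. rewrite Dk_S.
      change (cr (Re x) (Im x) t * Dk N t + 2 * (cr (Re x) (Im x) t * cos (INR (S N) * t)) =
              cr (Re x) (Im x) t * (Dk N t + 2 * cos (INR (S N) * t))). ring.
    + pose proof (is_RInt_plus _ _ _ _ _ _ H2 (is_RInt_scal _ _ _ 2 _ J2)) as H.
      eapply is_RInt_ext; [|exact H]. intros t _. rewrite Dk_S.
      change (ci (Re x) (Im x) t * Dk N t + 2 * (ci (Re x) (Im x) t * cos (INR (S N) * t)) =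
              ci (Re x) (Im x) t * (Dk N t + 2 * cos (INR (S N) * t))). ring.
Qed.

Lemma int_cesaro x N : notZ x ->
  is_RInt (fun t => cr (Re x) (Im x) t * Gk N t) 0 PI (Re (Cmul (Cpartial (Cpartial (cterm x)) N) (sx x))) /\
  is_RInt (fun t => ci (Re x) (Im x) t * Gk N t) 0 PI (Im (Cmul (Cpartial (Cpartial (cterm x)) N) (sx x))).
Proof.
  intros Hx. induction N.
  - exact (int_partial x 0 Hx).
  - destruct IHN as [H1 H2]. destruct (int_partial x (S N) Hx) as [J1 J2].
    assert (E : Cmul (Cpartial (Cpartial (cterm x)) (S N)) (sx x) =
      Cadd (Cmul (Cpartial (Cpartial (cterm x)) N) (sx x)) (Cmul (Cpartial (cterm x) (S N)) (sx x))).
    { change (Cpartial (Cpartial (cterm x)) (S N)) with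
        (Cadd (Cpartial (Cpartial (cterm x)) N) (Cpartial (cterm x) (S N))). ring. }
    rewrite E, Re_add, Im_add. split.
    + pose proof (is_RInt_plus _ _ _ _ _ _ H1 J1) as H.
      eapply is_RInt_ext; [|exact H]. intros t _. rewrite Gk_S.
      change (cr (Re x) (Im x) t * Gk N t + cr (Re x) (Im x) t * Dk (S N) t =
              cr (Re x) (Im x) t * (Gk N t + Dk (S N) t)). ring.
    + pose proof (is_RInt_plus _ _ _ _ _ _ H2 J2) as H.
      eapply is_RInt_ext; [|exact H]. intros t _. rewrite Gk_S.
      change (ci (Re x) (Im x) t * Gk N t + ci (Re x) (Im x) t * Dk (S N) t =
              ci (Re x) (Im x) t * (Gk N t + Dk (S N) t)). ring.
Qed.

Lemma cterm_conv x : notZ x -> exists L, Cseries_to (cterm x) L.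
Proof.
  intros Hx. destruct x as [p q].
  destruct (INR_unb (2 * Rabs p + 1)) as [M HM].
  assert (HM0 : (0 < M)%nat).
  { destruct M. simpl in HM. pose proof (Rabs_pos p). lra. lia. }
  apply (C_conv _ (4 * (Rabs p + Rabs q)) M HM0).
  intros n Hn. destruct n. lia.
  assert (HnM : INR M <= INR (S n)) by (apply le_INR; lia).
  set (N := INR (S n)) in *.
  assert (HA : Re (Csub (Cmul (mkC p q) (mkC p q)) (Cmul (Cnat (S n)) (Cnat (S n)))) = p*p - q*q - N*N).
  { unfold N; simpl; ring. }
  assert (HAb : N * N / 2 <= Rabs (p*p - q*q - N*N)).
  { pose proof (Rabs_pos p). assert (p * p = Rabs p * Rabs p) by (rewrite <- Rabs_mult; symmetry; apply Rabs_pos_eq; nra).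
    rewrite Rabs_left1. 2: nra. nra. }
  assert (HN : 0 < N) by (unfold N; apply lt_0_INR; lia).
  assert (HA0 : Re (Csub (Cmul (mkC p q) (mkC p q)) (Cmul (Cnat (S n)) (Cnat (S n)))) <> 0).
  { rewrite HA. intro E. rewrite E, Rabs_R0 in HAb. nra. }
  destruct (Cinv_bound _ HA0) as [Br Bi]. rewrite HA in Br, Bi.
  set (w := Cinv (Csub (Cmul (mkC p q) (mkC p q)) (Cmul (Cnat (S n)) (Cnat (S n))))) in *.
  assert (Hinv : / Rabs (p * p - q * q - N * N) <= 2 / (N * N)).
  { assert (0 < N * N / 2) by nra.
    replace (2 / (N * N)) with (/ (N * N / 2)) by (field; lra).
    apply Rinv_le_contravar; auto. }
  unfold cterm. rewrite Cpow_m1.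
  assert (Hs : Rabs ((-1) ^ S n) = 1) by (rewrite pow_1_abs; reflexivity).
  fold w.
  set (a := Cmul (RtoC ((-1) ^ S n)) (Cmul (RtoC 2) (mkC p q))).
  assert (Ra : Re a = (-1) ^ S n * (2 * p)) by (unfold a; simpl; ring).
  assert (Ia : Im a = (-1) ^ S n * (2 * q)) by (unfold a; simpl; ring).
  change (Rabs (Re a * Re w - Im a * Im w) <= 4 * (Rabs p + Rabs q) / (N * N) /\
          Rabs (Re a * Im w + Im a * Re w) <= 4 * (Rabs p + Rabs q) / (N * N)).
  pose proof (Rabs_pos p). pose proof (Rabs_pos q). pose proof (Rabs_pos (Re w)). pose proof (Rabs_pos (Im w)).
  assert (Hb : forall u v, Rabs u <= 2 * Rabs p -> Rabs v <= 2 * Rabs q ->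
     Rabs (u * Re w - v * Im w) <= 4 * (Rabs p + Rabs q) / (N * N) /\
     Rabs (u * Im w + v * Re w) <= 4 * (Rabs p + Rabs q) / (N * N)).
  { intros u v Hu Hv.
    assert (E1 : Rabs (u * Re w) <= 2 * Rabs p * (2 / (N*N))).
    { rewrite Rabs_mult. apply Rmult_le_compat; auto using Rabs_pos. lra. }
    assert (E2 : Rabs (v * Im w) <= 2 * Rabs q * (2 / (N*N))).
    { rewrite Rabs_mult. apply Rmult_le_compat; auto using Rabs_pos. lra. }
    assert (E3 : Rabs (u * Im w) <= 2 * Rabs p * (2 / (N*N))).
    { rewrite Rabs_mult. apply Rmult_le_compat; auto using Rabs_pos. lra. }
    assert (E4 : Rabs (v * Re w) <= 2 * Rabs q * (2 / (N*N))).
    { rewrite Rabs_mult. apply Rmult_le_compat; auto using Rabs_pos. lra. }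
    replace (4 * (Rabs p + Rabs q) / (N * N)) with (2 * Rabs p * (2 / (N*N)) + 2 * Rabs q * (2 / (N*N))) by (field; lra).
    split.
    - unfold Rminus. eapply Rle_trans. apply Rabs_triang. rewrite Rabs_Ropp. lra.
    - eapply Rle_trans. apply Rabs_triang. lra. }
  apply Hb.
  - rewrite Ra, Rabs_mult, Hs, Rabs_mult, (Rabs_pos_eq 2) by lra. lra.
  - rewrite Ia, Rabs_mult, Hs, Rabs_mult, (Rabs_pos_eq 2) by lra. lra.
Qed.

Lemma sx_nz x : notZ x -> sx x <> Czero.
Proof.
  intros Hx E. destruct x as [p q].
  assert (E1 := f_equal Re E). assert (E2 := f_equal Im E).
  unfold sx, sr, si, Czero, RtoC in E1, E2; simpl in E1, E2.
  assert (Hch : 0 < ch (q * PI)) by (unfold ch; pose proof (exp_pos (q*PI)); pose proof (exp_pos (-(q*PI))); lra).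
  assert (Hs : sin (p * PI) = 0) by (apply Rmult_integral in E1; destruct E1; [auto|lra]).
  assert (Hc : cos (p * PI) <> 0).
  { intro Hc0. pose proof (sin2_cos2 (p * PI)). unfold Rsqr in H. rewrite Hs, Hc0 in H. lra. }
  assert (Hsh : sh (q * PI) = 0) by (apply Rmult_integral in E2; destruct E2; [contradiction|auto]).
  unfold sh in Hsh. assert (Heq : exp (q * PI) = exp (- (q * PI))) by lra.
  apply (f_equal ln) in Heq. rewrite !ln_exp in Heq.
  assert (q = 0) by (pose proof PI_RGT_0; nra). subst q.
  destruct (sin_eq_0_0 _ Hs) as [k Hk].
  apply (Hx k). apply Ceq; simpl; auto.
  pose proof PI_RGT_0. apply (Rmult_eq_reg_r PI); lra.
Qed.

Lemma Un_cv_ext (u v : nat -> R) l : (forall n, u n = v n) -> Un_cv u l -> Un_cv v l.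
Proof. intros H Hu e He. destruct (Hu e He) as [N HN]. exists N; intros n Hn; rewrite <- H; auto. Qed.

Lemma CV_const c : Un_cv (fun _ => c) c.
Proof. intros e He. exists O. intros. unfold R_dist. rewrite Rminus_diag, Rabs_R0. exact He. Qed.

Lemma cr_cont p q t : continuous (cr p q) t.
Proof. apply cont_der. unfold cr, ch. auto_derive. exact I. Qed.
Lemma ci_cont p q t : continuous (ci p q) t.
Proof. apply cont_der. unfold ci, sh. auto_derive. exact I. Qed.

Lemma sec_series x : notZ x -> Cseries_to (cterm x) (Cdiv (RtoC PI) (sx x)).
Proof.
  intros Hx. destruct (cterm_conv x Hx) as [L [HLr HLi]].
  set (T := fun N => Cpartial (Cpartial (cterm x)) N).
  assert (Ces : forall (A : nat -> R) l, Un_cv A l -> Un_cv (fun N => sum_f_R0 A N / (INR N + 1)) l).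
  { intros A l HA. apply Cesaro_1 in HA. apply (CV_shift' _ 1) in HA.
    eapply Un_cv_ext; [|exact HA]. intros n. simpl. rewrite Nat.add_1_r, S_INR. reflexivity. }
  assert (C1 : Un_cv (fun N => Re (T N) / (INR N + 1)) (Re L)).
  { eapply Un_cv_ext; [|apply (Ces _ _ HLr)]. intros n. unfold T. rewrite Re_Cpartial. reflexivity. }
  assert (C2 : Un_cv (fun N => Im (T N) / (INR N + 1)) (Im L)).
  { eapply Un_cv_ext; [|apply (Ces _ _ HLi)]. intros n. unfold T. rewrite Im_Cpartial. reflexivity. }
  set (p := Re x). set (q := Im x).
  assert (Hcr0 : cr p q 0 = 1) by (unfold cr, ch; rewrite !Rmult_0_r, cos_0, Ropp_0, exp_0; field).
  assert (Hci0 : ci p q 0 = 0) by (unfold ci, sh; rewrite !Rmult_0_r, sin_0; ring).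
  assert (F1 : Un_cv (fun N => RInt (fun t => (cr p q t - 1) * Gk N t) 0 PI / (INR N + 1)) 0).
  { apply fejer. intros t _. apply (continuous_minus (cr p q) (fun _ => 1)). apply cr_cont. apply continuous_const.
    rewrite Hcr0; ring. }
  assert (F2 : Un_cv (fun N => RInt (fun t => ci p q t * Gk N t) 0 PI / (INR N + 1)) 0).
  { apply fejer. intros t _. apply ci_cont. exact Hci0. }
  assert (D1 : Un_cv (fun N => Re (Cmul (T N) (sx x)) / (INR N + 1)) PI).
  { replace PI with (0 + PI) by ring. eapply Un_cv_ext. 2:{ apply (CV_plus _ _ _ _ F1 (CV_const _)). }
    intros N. cbv beta.
    destruct (int_cesaro x N Hx) as [I1 _]. fold p q T in I1.
    pose proof (is_RInt_minus _ _ _ _ _ _ I1 (int_Gk N)) as I2.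
    apply (is_RInt_ext _ (fun t => (cr p q t - 1) * Gk N t)) in I2. 2:{ intros; change (cr p q x0 * Gk N x0 - Gk N x0 = (cr p q x0 - 1) * Gk N x0); ring. }
    apply (is_RInt_eqv _ _ _ _ (Re (Cmul (T N) (sx x)) - (INR N + 1) * PI)) in I2; [|reflexivity].
    rewrite (is_RInt_unique _ _ _ _ I2).
    field. pose proof (pos_INR N); lra. }
  assert (D2 : Un_cv (fun N => Im (Cmul (T N) (sx x)) / (INR N + 1)) 0).
  { eapply Un_cv_ext; [|exact F2]. intros N.
    destruct (int_cesaro x N Hx) as [_ I1]. fold p q T in I1.
    rewrite (is_RInt_unique _ _ _ _ I1). reflexivity. }
  assert (D1' : Un_cv (fun N => Re (Cmul (T N) (sx x)) / (INR N + 1)) (Re (Cmul L (sx x)))).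
  { eapply Un_cv_ext. 2:{ apply CV_minus; apply CV_mult; [exact C1 | apply CV_const
                                                       | exact C2 | apply CV_const]. }
    intros N. simpl. field. pose proof (pos_INR N); lra. }
  assert (D2' : Un_cv (fun N => Im (Cmul (T N) (sx x)) / (INR N + 1)) (Im (Cmul L (sx x)))).
  { eapply Un_cv_ext. 2:{ apply CV_plus; apply CV_mult; [exact C1 | apply CV_const
                                                       | exact C2 | apply CV_const]. }
    intros N. simpl. field. pose proof (pos_INR N); lra. }
  assert (EL : Cmul L (sx x) = RtoC PI).
  { apply Ceq; simpl. eapply UL_sequence; eauto. eapply UL_sequence; eauto. }
  assert (Lv : L = Cdiv (RtoC PI) (sx x)).
  { rewrite <- EL. field. apply sx_nz; auto. }
  rewrite <- Lv. split; auto.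
Qed.

Open Scope R_scope.

Lemma Cpow_m1' n : Cpow (Copp Cone) n = RtoC ((-1) ^ n).
Proof. induction n; simpl. reflexivity. rewrite IHn. apply Ceq; simpl; ring. Qed.

Lemma Cnat_S n : Cnat (S n) = Cadd (Cnat n) Cone.
Proof. apply Ceq; unfold Cnat; simpl; rewrite ?S_INR; try ring. destruct n; simpl; ring. Qed.

Definition bpair (x : Cplx) (k : nat) : Cplx :=
  Cinv (Cmul (Cadd (Cnat (2 * k)) x) (Cadd (Cnat (2 * k + 1)) x)).

Lemma bpair_eq x k : (forall n : nat, x <> Copp (Cnat n)) ->
  Cadd (beta_term x (2 * k)) (beta_term x (2 * k + 1)) = bpair x k.
Proof.
  intros H.
  assert (H1 : Cadd (Cnat (2 * k)) x <> Czero).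
  { intro E; apply (H (2 * k)%nat). replace x with (Csub (Cadd (Cnat (2 * k)) x) (Cnat (2*k))) by ring. rewrite E. ring. }
  assert (H2 : Cadd (Cnat (2 * k + 1)) x <> Czero).
  { intro E; apply (H (2 * k + 1)%nat). replace x with (Csub (Cadd (Cnat (2 * k + 1)) x) (Cnat (2*k+1))) by ring. rewrite E. ring. }
  unfold beta_term, bpair. rewrite !Cpow_m1'. rewrite Nat.add_1_r in *. rewrite pow_1_even, pow_1_odd.
  rewrite Cnat_S in *.
  replace (RtoC 1) with Cone by reflexivity. replace (RtoC (-1)) with (Copp Cone) by (apply Ceq; simpl; ring).
  field. split; auto.
Qed.

Lemma Cpartial_pair x K : (forall n : nat, x <> Copp (Cnat n)) ->
  Cpartial (beta_term x) (2 * K + 1) = Cpartial (bpair x) K.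
Proof.
  intros H. induction K.
  - simpl. rewrite <- (bpair_eq x 0 H). reflexivity.
  - replace (2 * S K + 1)%nat with (S (S (2 * K + 1))) by lia.
    change (Cpartial (beta_term x) (S (S (2 * K + 1)))) with
      (Cadd (Cadd (Cpartial (beta_term x) (2 * K + 1)) (beta_term x (S (2 * K + 1)))) (beta_term x (S (S (2 * K + 1))))).
    change (Cpartial (bpair x) (S K)) with (Cadd (Cpartial (bpair x) K) (bpair x (S K))).
    rewrite IHK, <- (bpair_eq x (S K) H).
    replace (S (2 * K + 1)) with (2 * S K)%nat by lia.
    replace (S (2 * S K)) with (2 * S K + 1)%nat by lia. ring.
Qed.

Lemma INR_unb' r : exists n : nat, r < INR n.
Proof.
  destruct (archimed r) as [H1 _]. exists (Z.to_nat (up r)).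
  destruct (Z_le_gt_dec 0 (up r)).
  - rewrite INR_IZR_INZ, Z2Nat.id; auto.
  - pose proof (pos_INR (Z.to_nat (up r))). apply Z.gt_lt in g. apply IZR_lt in g. lra.
Qed.

Lemma bpair_conv x : (forall n : nat, x <> Copp (Cnat n)) -> exists L, Cseries_to (bpair x) L.
Proof.
  intros H. destruct x as [p q].
  destruct (INR_unb' (2 * Rabs p + Rabs q + 1)) as [M HM].
  assert (HM0 : (0 < M)%nat).
  { destruct M. simpl in HM. pose proof (Rabs_pos p). pose proof (Rabs_pos q). lra. lia. }
  apply (C_conv _ 1 M HM0). intros k Hk.
  assert (HkM : INR M <= INR k) by (apply le_INR; lia).
  set (K := INR k) in *.
  assert (Hw : Re (Cmul (Cadd (Cnat (2 * k)) (mkC p q)) (Cadd (Cnat (2 * k + 1)) (mkC p q))) = (2*K+p)*(2*K+1+p) - q*q).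
  { unfold Cnat. rewrite plus_INR, mult_INR. simpl. fold K. ring. }
  pose proof (Rabs_pos p). pose proof (Rabs_pos q).
  assert (Hp : - Rabs p <= p) by (destruct (Rcase_abs p); [rewrite Rabs_left|rewrite Rabs_right]; lra).
  assert (Hq : q * q = Rabs q * Rabs q) by (rewrite <- Rabs_mult; symmetry; apply Rabs_pos_eq; nra).
  assert (Ha : K + Rabs q <= 2*K+p) by lra.
  assert (Hs1 : (K + Rabs q) * (K + Rabs q) <= (2*K+p)*(2*K+p)) by (apply Rmult_le_compat; lra).
  assert (Hbig : K * K <= (2*K+p)*(2*K+1+p) - q*q).
  { assert (E: (2*K+p)*(2*K+1+p) - q*q = (2*K+p)*(2*K+p) + (2*K+p) - Rabs q * Rabs q) by (rewrite Hq; ring). rewrite E.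
    assert (0 <= K * Rabs q) by (apply Rmult_le_pos; lra). nra. }
  assert (HK : 0 < K) by lra.
  assert (Hne : Re (Cmul (Cadd (Cnat (2 * k)) (mkC p q)) (Cadd (Cnat (2 * k + 1)) (mkC p q))) <> 0) by (rewrite Hw; nra).
  destruct (Cinv_bound _ Hne) as [B1 B2]. rewrite Hw in B1, B2.
  rewrite (Rabs_pos_eq ((2*K+p)*(2*K+1+p) - q*q)) in B1, B2 by nra.
  assert (/ ((2*K+p)*(2*K+1+p) - q*q) <= 1 / (K * K)).
  { unfold Rdiv; rewrite Rmult_1_l. apply Rinv_le_contravar; nra. }
  unfold bpair. split; lra.
Qed.

Lemma even_odd_cv (u : nat -> R) l :
  Un_cv (fun K => u (2 * K)%nat) l -> Un_cv (fun K => u (2 * K + 1)%nat) l -> Un_cv u l.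
Proof.
  intros H1 H2 e He. destruct (H1 e He) as [N1 HN1]. destruct (H2 e He) as [N2 HN2].
  exists (2 * (N1 + N2) + 2)%nat. intros n Hn.
  destruct (Nat.Even_or_Odd n) as [[k Hk]|[k Hk]]; subst n.
  - apply HN1. lia.
  - apply HN2. lia.
Qed.

Lemma beta_term_0 x : Un_cv (fun n => Re (beta_term x n)) 0 /\ Un_cv (fun n => Im (beta_term x n)) 0.
Proof.
  destruct x as [p q].
  assert (Hb : forall n : nat, Rabs p + 1 <= INR n ->
    Rabs (Re (beta_term (mkC p q) n)) <= / (INR n - Rabs p) /\ Rabs (Im (beta_term (mkC p q) n)) <= / (INR n - Rabs p)).
  { intros n Hn. unfold beta_term, Cdiv. rewrite Cpow_m1'.
    assert (Hp : - Rabs p <= p) by (destruct (Rcase_abs p); [rewrite Rabs_left|rewrite Rabs_right]; lra).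
    assert (HR : Re (Cadd (Cnat n) (mkC p q)) = INR n + p) by reflexivity.
    assert (Hne : Re (Cadd (Cnat n) (mkC p q)) <> 0) by (rewrite HR; pose proof (Rabs_pos p); lra).
    destruct (Cinv_bound _ Hne) as [B1 B2]. rewrite HR in B1, B2.
    rewrite (Rabs_pos_eq (INR n + p)) in B1, B2 by (pose proof (Rabs_pos p); lra).
    assert (/ (INR n + p) <= / (INR n - Rabs p)) by (apply Rinv_le_contravar; pose proof (Rabs_pos p); lra).
    set (w := Cinv (Cadd (Cnat n) (mkC p q))) in *.
    assert (Hs : Rabs ((-1) ^ n) = 1) by (rewrite pow_1_abs; reflexivity).
    change (Rabs ((-1)^n * Re w - 0 * Im w) <= / (INR n - Rabs p) /\ Rabs ((-1)^n * Im w + 0 * Re w) <= / (INR n - Rabs p)).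
    rewrite !Rmult_0_l, Rminus_0_r, Rplus_0_r, !Rabs_mult, Hs. lra. }
  assert (G : forall f : nat -> R, (forall n, Rabs p + 1 <= INR n -> Rabs (f n) <= / (INR n - Rabs p)) -> Un_cv f 0).
  { intros f Hf e He. destruct (INR_unb' (Rabs p + 1 + / e)) as [N HN].
    exists N. intros n Hn. unfold R_dist. rewrite Rminus_0_r.
    assert (INR N <= INR n) by (apply le_INR; lia).
    assert (0 < / e) by (apply Rinv_0_lt_compat; lra).
    eapply Rle_lt_trans. apply Hf. lra.
    rewrite <- (Rinv_inv e). apply Rinv_lt_contravar. apply Rmult_lt_0_compat; lra. lra. }
  split; apply G; intros; apply Hb; auto.
Qed.

Lemma Un_cv_ext' (v u : nat -> R) l : (forall n, v n = u n) -> Un_cv u l -> Un_cv v l.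
Proof. intros H Hu e He. destruct (Hu e He) as [N HN]. exists N; intros n Hn; rewrite H; auto. Qed.

Lemma Un_cv_sub (u : nat -> R) (phi : nat -> nat) l : (forall K, (K <= phi K)%nat) -> Un_cv u l -> Un_cv (fun K => u (phi K)) l.
Proof. intros H Hu e He. destruct (Hu e He) as [N HN]. exists N; intros n Hn. apply HN. specialize (H n). lia. Qed.

Lemma beta_conv x : (forall n : nat, x <> Copp (Cnat n)) -> exists L, Cseries_to (beta_term x) L.
Proof.
  intros H. destruct (bpair_conv x H) as [L [HL1 HL2]]. exists L.
  destruct (beta_term_0 x) as [T1 T2].
  assert (S1 := Un_cv_sub _ (fun K => 2 * K + 1)%nat _ ltac:(intros; cbv beta; lia) T1).
  assert (S2 := Un_cv_sub _ (fun K => 2 * K + 1)%nat _ ltac:(intros; cbv beta; lia) T2).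
  simpl in S1, S2.
  split; apply even_odd_cv.
  - apply (Un_cv_ext' _ (fun K => Re (Cpartial (beta_term x) (2 * K + 1)) - Re (beta_term x (2 * K + 1)))).
    { intros K. replace (2 * K + 1)%nat with (S (2 * K)) by lia.
      change (Re (Cpartial (beta_term x) (S (2 * K)))) with (Re (Cpartial (beta_term x) (2 * K)) + Re (beta_term x (S (2 * K)))). ring. }
    replace (Re L) with (Re L - 0) by ring. apply CV_minus; auto.
    eapply Un_cv_ext'. intros K; rewrite Cpartial_pair; auto; reflexivity. exact HL1.
  - eapply Un_cv_ext'. intros K; rewrite Cpartial_pair; auto; reflexivity. exact HL1.
  - apply (Un_cv_ext' _ (fun K => Im (Cpartial (beta_term x) (2 * K + 1)) - Im (beta_term x (2 * K + 1)))).
    { intros K. replace (2 * K + 1)%nat with (S (2 * K)) by lia.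
      change (Im (Cpartial (beta_term x) (S (2 * K)))) with (Im (Cpartial (beta_term x) (2 * K)) + Im (beta_term x (S (2 * K)))). ring. }
    replace (Im L) with (Im L - 0) by ring. apply CV_minus; auto.
    eapply Un_cv_ext'. intros K; rewrite Cpartial_pair; auto; reflexivity. exact HL2.
  - eapply Un_cv_ext'. intros K; rewrite Cpartial_pair; auto; reflexivity. exact HL2.
Qed.

Open Scope R_scope.

Lemma Cexp_add z w : Cexp (Cadd z w) = Cmul (Cexp z) (Cexp w).
Proof.
  destruct z as [a b], w as [c d]. apply Ceq; unfold Cexp; simpl; rewrite exp_plus, ?cos_plus, ?sin_plus; ring.
Qed.

Lemma Ccos_prod z w : Cmul (RtoC 2) (Cmul (Ccos z) (Ccos w)) = Cadd (Ccos (Cadd z w)) (Ccos (Csub z w)).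
Proof.
  unfold Ccos.
  replace (Cmul Ci (Cadd z w)) with (Cadd (Cmul Ci z) (Cmul Ci w)) by ring.
  replace (Copp (Cadd (Cmul Ci z) (Cmul Ci w))) with (Cadd (Copp (Cmul Ci z)) (Copp (Cmul Ci w))) by ring.
  replace (Cmul Ci (Csub z w)) with (Cadd (Cmul Ci z) (Copp (Cmul Ci w))) by ring.
  replace (Copp (Cadd (Cmul Ci z) (Copp (Cmul Ci w)))) with (Cadd (Copp (Cmul Ci z)) (Cmul Ci w)) by ring.
  rewrite !Cexp_add.
  assert (H2 : RtoC 2 <> Czero) by (intro E; apply (f_equal Re) in E; simpl in E; lra).
  field. exact H2.
Qed.

Lemma sx_Ccos y w : y = Cadd (Cdiv Cone (RtoC 2)) w -> sx y = Ccos (Cmul (RtoC PI) w).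
Proof.
  intros ->. destruct w as [wr wi].
  unfold sx, sr, si, ch, sh, Ccos, Cexp, Cdiv, Cinv, Cmul, Cadd, Copp, Ci, RtoC, Cone. simpl.
  replace ((1 * (2 / (2 * 2 + 0 * 0)) - 0 * (- 0 / (2 * 2 + 0 * 0)) + wr) * PI) with (PI/2 + PI * wr) by field.
  rewrite sin_plus, cos_plus, sin_PI2, cos_PI2.
  replace ((1 * (- 0 / (2 * 2 + 0 * 0)) + 0 * (2 / (2 * 2 + 0 * 0)) + wi) * PI) with (PI * wi) by field.
  replace (0 * (PI * wr - 0 * wi) - 1 * (PI * wi + 0 * wr)) with (- (PI * wi)) by ring.
  replace (0 * (PI * wi + 0 * wr) + 1 * (PI * wr - 0 * wi)) with (PI * wr) by ring.
  rewrite ?cos_neg, ?sin_neg, ?Ropp_involutive.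
  apply Ceq; simpl; field.
Qed.

Open Scope R_scope.

Lemma poch_shift l n : Cmul (poch (Cadd l Cone) n) l = Cmul (poch l n) (Cadd l (Cnat n)).
Proof.
  induction n.
  - simpl. apply Ceq; simpl; ring.
  - simpl poch. rewrite Cnat_S.
    transitivity (Cmul (Cmul (poch (Cadd l Cone) n) l) (Cadd (Cadd l Cone) (Cnat n))). ring.
    rewrite IHn. ring.
Qed.

Lemma poch_one n : poch Cone n = Cnat (Factorial.fact n).
Proof.
  induction n. reflexivity.
  simpl poch. rewrite IHn. unfold Cnat. change (Factorial.fact (S n)) with (S n * Factorial.fact n)%nat.
  rewrite mult_INR, S_INR. apply Ceq; simpl; ring.
Qed.

Lemma poch_nz l n : ~ in_Z0m l -> poch l n <> Czero.
Proof.
  intros H. induction n.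
  - intro E. apply (f_equal Re) in E. simpl in E. lra.
  - simpl. intro E. apply Cmul_integral in E. destruct E as [E|E]. auto.
    apply H. exists n. replace l with (Csub (Cadd l (Cnat n)) (Cnat n)) by ring. rewrite E. ring.
Qed.

Lemma Cnat_nz n : Cnat n <> Czero \/ n = O.
Proof.
  destruct n. right; auto. left. intro E. apply (f_equal Re) in E. unfold Cnat in E; simpl in E.
  pose proof (lt_0_INR (S n) ltac:(lia)). simpl in H. lra.
Qed.

Lemma fact_nz n : Cnat (Factorial.fact n) <> Czero.
Proof.
  destruct (Cnat_nz (Factorial.fact n)) as [H|H]; auto. pose proof (Factorial.lt_O_fact n). lia.
Qed.

Lemma CUn_add s1 s2 l1 l2 : CUn_cv s1 l1 -> CUn_cv s2 l2 -> CUn_cv (fun n => Cadd (s1 n) (s2 n)) (Cadd l1 l2).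
Proof. intros [A B] [C D]; split; simpl; apply CV_plus; auto. Qed.
Lemma CUn_sub s1 s2 l1 l2 : CUn_cv s1 l1 -> CUn_cv s2 l2 -> CUn_cv (fun n => Csub (s1 n) (s2 n)) (Csub l1 l2).
Proof. intros [A B] [C D]; split; simpl; [apply (CV_plus _ _ _ _ A) | apply (CV_plus _ _ _ _ B)];
  apply (CV_opp _ _); auto. Qed.
Lemma CUn_scal k s l : CUn_cv s l -> CUn_cv (fun n => Cmul k (s n)) (Cmul k l).
Proof. intros [A B]; split; simpl.
  - apply CV_minus; apply CV_mult; auto using CV_const.
  - apply CV_plus; apply CV_mult; auto using CV_const. Qed.
Lemma CUn_shift s l : CUn_cv s l -> CUn_cv (fun n => s (S n)) l.
Proof. intros [A B]; split; [apply (Un_cv_sub (fun n => Re (s n)) S) | apply (Un_cv_sub (fun n => Im (s n)) S)]; auto. Qed.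
Lemma CUn_ext s1 s2 l : (forall n, s1 n = s2 n) -> CUn_cv s1 l -> CUn_cv s2 l.
Proof. intros H [A B]; split; [eapply Un_cv_ext'|eapply Un_cv_ext']; try eassumption; intros; simpl; rewrite H; auto. Qed.

Lemma notZ_ne x m : notZ x -> Csub x (Cnat m) <> Czero /\ Cadd x (Cnat m) <> Czero.
Proof.
  intros H. split; intro E.
  - apply (H (Z.of_nat m)). rewrite <- Cnat_IZR. replace x with (Cadd (Csub x (Cnat m)) (Cnat m)) by ring. rewrite E; ring.
  - apply (H (- Z.of_nat m)%Z). rewrite opp_IZR. replace x with (Csub (Cadd x (Cnat m)) (Cnat m)) by ring.
    rewrite E, Cnat_IZR. apply Ceq; simpl; ring.
Qed.

Lemma Cnat0 : Cnat 0 = Czero. Proof. apply Ceq; reflexivity. Qed.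

Lemma beta_refl x N : notZ x ->
  Cpartial (beta_term (Csub Cone x)) N = Csub (Cpartial (cterm x) (S N)) (Cpartial (beta_term x) (S N)).
Proof.
  intros H. pose proof (notZ_0 x H) as H0.
  induction N.
  - destruct (notZ_ne x 1 H) as [A1 B1]. pose proof (notZ_sq x 1 H) as S1.
    change (Cpartial (beta_term (Csub Cone x)) 0) with (beta_term (Csub Cone x) 0).
    change (Cpartial (cterm x) 1) with (Cadd (cterm x 0) (cterm x 1)).
    change (Cpartial (beta_term x) 1) with (Cadd (beta_term x 0) (beta_term x 1)).
    unfold cterm, beta_term. simpl Cpow.
    assert (E1 : Cnat 1 = Cone) by (apply Ceq; reflexivity). rewrite E1, Cnat0 in *.
    rewrite RtoC2. pose proof two_nz.
    field. repeat split; nz.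
  - 
    destruct (notZ_ne x (S (S N)) H) as [A1 B1]. pose proof (notZ_sq x (S (S N)) H) as S1.
    change (Cpartial (beta_term (Csub Cone x)) (S N)) with (Cadd (Cpartial (beta_term (Csub Cone x)) N) (beta_term (Csub Cone x) (S N))).
    change (Cpartial (cterm x) (S (S N))) with (Cadd (Cpartial (cterm x) (S N)) (cterm x (S (S N)))).
    change (Cpartial (beta_term x) (S (S N))) with (Cadd (Cpartial (beta_term x) (S N)) (beta_term x (S (S N)))).
    rewrite IHN.
    assert (E : beta_term (Csub Cone x) (S N) = Csub (cterm x (S (S N))) (beta_term x (S (S N)))).
    { unfold cterm, beta_term.
      change (Cpow (Copp Cone) (S (S N))) with (Cmul (Copp Cone) (Cmul (Copp Cone) (Cpow (Copp Cone) N))).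
      change (Cpow (Copp Cone) (S N)) with (Cmul (Copp Cone) (Cpow (Copp Cone) N)).
      rewrite !Cnat_S in *. rewrite RtoC2. pose proof two_nz.
      field. repeat split; nz. }
    rewrite E. ring.
Qed.

Open Scope R_scope.

Lemma odd_of_int (z : Cplx) k : z = RtoC (2 * IZR k - 1) -> odd_int z.
Proof.
  intros ->. destruct (Z_le_gt_dec 1 k).
  - exists (Z.to_nat (k - 1)). left. apply Ceq; unfold Cnat, Copp, RtoC; cbn [Re Im].
    rewrite INR_IZR_INZ, Nat2Z.inj_add, Nat2Z.inj_mul, Z2Nat.id by lia.
    rewrite plus_IZR, mult_IZR, minus_IZR. simpl. ring. ring.
  - exists (Z.to_nat (- k)). right. apply Ceq; unfold Cnat, Copp, RtoC; cbn [Re Im].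
    rewrite INR_IZR_INZ, Nat2Z.inj_add, Nat2Z.inj_mul, Z2Nat.id by lia.
    rewrite plus_IZR, mult_IZR, opp_IZR. simpl. ring. ring.
Qed.

Lemma Cpartial_ext f g N : (forall n, f n = g n) -> Cpartial f N = Cpartial g N.
Proof. intros H; induction N; simpl; rewrite ?IHN, ?H; auto. Qed.

Lemma Cpartial_lin k f1 f2 f3 f4 N :
  Cpartial (fun n => Cmul k (Cadd (Csub (Cadd (Csub (f1 n) (f3 n)) (f2 n)) (f4 n)) Czero)) N =
  Cmul k (Csub (Cadd (Csub (Cpartial f1 N) (Cpartial f3 N)) (Cpartial f2 N)) (Cpartial f4 N)).
Proof. induction N; simpl Cpartial. ring. rewrite IHN. ring. Qed.

Open Scope C_scope.

Lemma tshift t n : t <> Czero -> ~ in_Z0m (Cone + t) -> Cadd t (Cnat n) <> Czero.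
Proof.
  intros H1 H2 E. destruct n.
  - apply H1. rewrite <- E. rewrite Cnat0. ring.
  - apply H2. exists n. rewrite Cnat_S in E. transitivity (Csub (Cadd t (Cadd (Cnat n) Cone)) (Cnat n)). ring.
    rewrite E. ring.
Qed.

Lemma nz_scale x y k : k <> Czero -> y <> Czero -> x = Cmul k y -> x <> Czero.
Proof. intros Hk Hy -> E. apply Cmul_integral in E. tauto. Qed.

Lemma RtoC3 : RtoC 3 = Cadd (Cadd Cone Cone) Cone. Proof. apply Ceq; simpl; lra. Qed.
Lemma RtoC4 : RtoC 4 = Cmul (Cadd Cone Cone) (Cadd Cone Cone). Proof. apply Ceq; simpl; lra. Qed.

Lemma poch_up l n : l <> Czero -> poch (Cadd l Cone) n = Cdiv (Cmul (poch l n) (Cadd l (Cnat n))) l.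
Proof. intros H. transitivity (Cdiv (Cmul (poch (Cadd l Cone) n) l) l). field; auto. rewrite poch_shift. reflexivity. Qed.

Lemma poch_down t n : Cadd t (Cnat n) <> Czero -> poch t n = Cdiv (Cmul t (poch (Cadd Cone t) n)) (Cadd t (Cnat n)).
Proof.
  intros H. replace (Cadd Cone t) with (Cadd t Cone) by ring.
  transitivity (Cdiv (Cmul (poch t n) (Cadd t (Cnat n))) (Cadd t (Cnat n))). field; auto.
  rewrite <- poch_shift. field. auto.
Qed.

Theorem mainTheorem6 (a b c s : Cplx)
  (ha : a <> Czero)
  (hb : (0 < Re b)%R)
  (h1 : (0 < Re (b + a + c)%C)%R)
  (h2 : (0 < Re (b + a - c)%C)%R)
  (h3 : (0 < Re (b - a + c)%C)%R)
  (h4 : (0 < Re (b - a - c)%C)%R)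
  (hodd1 : ~ odd_int ((a + c) / b))
  (hodd2 : ~ odd_int ((a - c) / b))
  (hs : s * s = a * a - c * c) :
  let mu := s / (RtoC 2 * b) in
  let half := Cone / RtoC 2 in
  let t1 := half - (a + c) / (RtoC 2 * b) in
  let t2 := half - (a - c) / (RtoC 2 * b) in
  let t3 := half + (a + c) / (RtoC 2 * b) in
  let t4 := half + (a - c) / (RtoC 2 * b) in
  let Q := (b - a - c) * (b + a + c) * (b - a + c) * (b + a - c) in
  let D := a * b ^ 3 - a ^ 3 * b + a * b * c * c in
  let pi := RtoC PI in
  ~ in_Z0m (half + mu) -> ~ in_Z0m (half - mu) ->
  ~ in_Z0m (Cone + t1) -> ~ in_Z0m (Cone + t2) ->
  ~ in_Z0m (Cone + t3) -> ~ in_Z0m (Cone + t4) ->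
  exists beta1 beta2 : Cplx,
    Cseries_to (beta_term ((a + b + c) / (RtoC 2 * b))) beta1 /\
    Cseries_to (beta_term ((a + b - c) / (RtoC 2 * b))) beta2 /\
    Cseries_to
      (hyp_term [Cone; RtoC 3 / RtoC 2 - mu; RtoC 3 / RtoC 2 + mu; t1; t2; t3; t4]
                [half - mu; half + mu; Cone + t1; Cone + t2; Cone + t3; Cone + t4]
                (- Cone))
      (pi * Q / (RtoC 2 * D)
         * (Ccos (a * pi / (RtoC 2 * b)) * Ccos (c * pi / (RtoC 2 * b))
            / (Ccos (c * pi / b) + Ccos (a * pi / b)))
       - Q / (RtoC 4 * D) * (beta1 + beta2)).
Proof.
  intros mu half t1 t2 t3 t4 Q D pi Hpm Hmm Hp1 Hp2 Hp3 Hp4.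
  set (u := (a + c) / (RtoC 2 * b)) in *.
  set (v := (a - c) / (RtoC 2 * b)) in *.
  assert (hb0 : b <> Czero) by (intro E; rewrite E in hb; simpl in hb; lra).
  pose proof two_nz as H2.
  assert (Hhalf : half = Cone / (Cone + Cone)) by (unfold half; rewrite RtoC2; reflexivity).
  assert (Hmu : mu * mu = u * v).
  { unfold mu, u, v. rewrite RtoC2.
    transitivity ((s * s) / ((Cone + Cone) * b * ((Cone + Cone) * b))). field; split; auto.
    rewrite hs. field; split; auto. }
  assert (Hhm : half - mu <> Czero).
  { intro E; apply Hmm; exists O; rewrite E; apply Ceq; simpl; ring. }
  assert (Hhp : half + mu <> Czero).
  { intro E; apply Hpm; exists O; rewrite E; apply Ceq; simpl; ring. }
  assert (Hu2 : (a + c) / b = RtoC 2 * u) by (unfold u; rewrite !RtoC2; field; split; auto).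
  assert (Hv2 : (a - c) / b = RtoC 2 * v) by (unfold v; rewrite !RtoC2; field; split; auto).
  assert (Hnz3 : notZ t3).
  { intros k E. apply hodd1. apply (odd_of_int _ k). rewrite Hu2.
    assert (u = t3 - half) by (unfold t3; ring). rewrite H, E, Hhalf.
    apply Ceq; simpl; field; lra. }
  assert (Hnz4 : notZ t4).
  { intros k E. apply hodd2. apply (odd_of_int _ k). rewrite Hv2.
    assert (v = t4 - half) by (unfold t4; ring). rewrite H, E, Hhalf.
    apply Ceq; simpl; field; lra. }
  assert (Ht1 : t1 <> Czero).
  { intro E. apply hodd1. apply (odd_of_int _ 1%Z). rewrite Hu2.
    assert (u = half - t1) by (unfold t1; ring). rewrite H, E, Hhalf. apply Ceq; simpl; field; lra. }
  assert (Ht2 : t2 <> Czero).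
  { intro E. apply hodd2. apply (odd_of_int _ 1%Z). rewrite Hv2.
    assert (v = half - t2) by (unfold t2; ring). rewrite H, E, Hhalf. apply Ceq; simpl; field; lra. }
  assert (Ht3 : t3 <> Czero).
  { intro E. apply hodd1. apply (odd_of_int _ 0%Z). rewrite Hu2.
    assert (u = t3 - half) by (unfold t3; ring). rewrite H, E, Hhalf. apply Ceq; simpl; field; lra. }
  assert (Ht4 : t4 <> Czero).
  { intro E. apply hodd2. apply (odd_of_int _ 0%Z). rewrite Hv2.
    assert (v = t4 - half) by (unfold t4; ring). rewrite H, E, Hhalf. apply Ceq; simpl; field; lra. }
  assert (Huv : u + v <> Czero).
  { intro E. apply ha. assert (a = b * (u + v)) by (unfold u, v; rewrite RtoC2; field; split; auto).
    rewrite H, E. ring. }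
  set (kap := t1 * t2 * t3 * t4 / ((Cone + Cone) * (u + v) * ((half - mu) * (half + mu)))).
  set (F := hyp_term [Cone; RtoC 3 / RtoC 2 - mu; RtoC 3 / RtoC 2 + mu; t1; t2; t3; t4]
                [half - mu; half + mu; Cone + t1; Cone + t2; Cone + t3; Cone + t4] (- Cone)).
  assert (Hterm : forall n, F n = Cmul kap (Cadd (Csub (Cadd (Csub (beta_term t1 n) (beta_term t3 n)) (beta_term t2 n)) (beta_term t4 n)) Czero)).
  { intros n.
    pose proof (tshift t1 n Ht1 Hp1). pose proof (tshift t2 n Ht2 Hp2).
    pose proof (tshift t3 n Ht3 Hp3). pose proof (tshift t4 n Ht4 Hp4).
    pose proof (poch_nz _ n Hmm). pose proof (poch_nz _ n Hpm).
    pose proof (poch_nz _ n Hp1). pose proof (poch_nz _ n Hp2). pose proof (poch_nz _ n Hp3). pose proof (poch_nz _ n Hp4).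
    pose proof (fact_nz n).
    transitivity (Cpow (- Cone) n * ((half - mu + Cnat n) * (half + mu + Cnat n)) / ((half - mu) * (half + mu))
       * (t1 / (t1 + Cnat n)) * (t2 / (t2 + Cnat n)) * (t3 / (t3 + Cnat n)) * (t4 / (t4 + Cnat n))).
    - unfold F, hyp_term. cbn [map Cprod fold_right]. rewrite poch_one.
      assert (E1 : RtoC 3 / RtoC 2 - mu = Cadd (half - mu) Cone) by (rewrite Hhalf, RtoC3, RtoC2; field; auto).
      assert (E2 : RtoC 3 / RtoC 2 + mu = Cadd (half + mu) Cone) by (rewrite Hhalf, RtoC3, RtoC2; field; auto).
      rewrite E1, E2, !poch_up by auto.
      rewrite (poch_down t1 n), (poch_down t2 n), (poch_down t3 n), (poch_down t4 n) by auto.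
      field. repeat split; nz.
    - assert (Hnum : (half - mu + Cnat n) * (half + mu + Cnat n) = (half + Cnat n) * (half + Cnat n) - u * v).
      { transitivity ((half + Cnat n) * (half + Cnat n) - mu * mu). ring. rewrite Hmu. reflexivity. }
      rewrite Hnum. unfold kap, beta_term. unfold t1, t2, t3, t4 in *.
      field. repeat split; nz. }
  assert (Ht1e : t1 = Csub Cone t3) by (unfold t1, t3; rewrite Hhalf; field; exact H2).
  assert (Ht2e : t2 = Csub Cone t4) by (unfold t2, t4; rewrite Hhalf; field; exact H2).
  assert (HP : forall N, Cpartial F N = Cmul kap (Csub (Cadd (Csub (Csub (Cpartial (cterm t3) (S N)) (Cpartial (beta_term t3) (S N))) (Cpartial (beta_term t3) N))
                  (Csub (Cpartial (cterm t4) (S N)) (Cpartial (beta_term t4) (S N)))) (Cpartial (beta_term t4) N))).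
  { intros N. rewrite (Cpartial_ext _ _ N Hterm), Cpartial_lin.
    rewrite Ht1e at 1. rewrite Ht2e at 1.
    rewrite (beta_refl t3 N Hnz3), (beta_refl t4 N Hnz4). ring. }
  assert (Hn3 : forall n : nat, t3 <> Copp (Cnat n)).
  { intros n E. apply (Hnz3 (- Z.of_nat n)%Z). rewrite E, opp_IZR, Cnat_IZR. apply Ceq; simpl; ring. }
  assert (Hn4 : forall n : nat, t4 <> Copp (Cnat n)).
  { intros n E. apply (Hnz4 (- Z.of_nat n)%Z). rewrite E, opp_IZR, Cnat_IZR. apply Ceq; simpl; ring. }
  destruct (beta_conv t3 Hn3) as [be3 Hbe3].
  destruct (beta_conv t4 Hn4) as [be4 Hbe4].
  pose proof (sec_series t3 Hnz3) as Hs3. pose proof (sec_series t4 Hnz4) as Hs4.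
  assert (HL : Cseries_to F (Cmul kap (Csub (Cadd (Csub (Csub (Cdiv (RtoC PI) (sx t3)) be3) be3)
                  (Csub (Cdiv (RtoC PI) (sx t4)) be4)) be4))).
  { apply (CUn_ext _ _ _ (fun N => eq_sym (HP N))).
    apply CUn_scal. apply CUn_sub. apply CUn_add. apply CUn_sub. apply CUn_sub.
    apply (CUn_shift (Cpartial (cterm t3))); exact Hs3.
    apply (CUn_shift (Cpartial (beta_term t3))); exact Hbe3.
    exact Hbe3.
    apply CUn_sub. apply (CUn_shift (Cpartial (cterm t4))); exact Hs4.
    apply (CUn_shift (Cpartial (beta_term t4))); exact Hbe4.
    exact Hbe4. }
  exists be3, be4. split; [|split].
  - replace ((a + b + c) / (RtoC 2 * b)) with t3. exact Hbe3.
    unfold t3, u. rewrite Hhalf, RtoC2. field. auto.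
  - replace ((a + b - c) / (RtoC 2 * b)) with t4. exact Hbe4.
    unfold t4, v. rewrite Hhalf, RtoC2. field. auto.
  - assert (HB2 : (half - mu) * (half + mu) = half * half - u * v).
    { transitivity (half * half - mu * mu). ring. rewrite Hmu. reflexivity. }
    assert (Hhh : half * half - u * v <> Czero).
    { rewrite <- HB2. intro E. apply Cmul_integral in E. destruct E; auto. }
    assert (Hpoly : b * b - a * a + c * c <> Czero).
    { assert (EQ : half * half - u * v = (b * b - a * a + c * c) / ((Cone + Cone) * (Cone + Cone) * b * b)).
      { unfold u, v. rewrite Hhalf, RtoC2. field. repeat split; nz. }
      intro E. apply Hhh. rewrite EQ, E. field. repeat split; nz. }
    assert (HK : Q = (Cone + Cone) * (Cone + Cone) * (Cone + Cone) * D * kap).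
    { unfold kap. rewrite HB2. unfold Q, D, t1, t2, t3, t4, u, v.
      change (b ^ 3) with (b * (b * (b * Cone))). change (a ^ 3) with (a * (a * (a * Cone))).
      rewrite Hhalf, RtoC2. field. repeat split. all: try nz.
      - change (mkC (R1 + R1) (R0 + R0)) with (Cadd Cone Cone).
        change (mkC ((R1 + R1) * (R1 + R1) + - ((R0 + R0) * (R0 + R0))) ((R1 + R1) * (R0 + R0) + (R0 + R0) * (R1 + R1)))
          with (Cmul (Cadd Cone Cone) (Cadd Cone Cone)).
        apply (nz_scale _ (b * b - a * a + c * c) ((Cone + Cone) * (Cone + Cone))); auto. nz. ring.
      - apply (nz_scale _ a (Cone + Cone)); auto. ring. }
    assert (HX3 : sx t3 = Ccos (Cmul (RtoC PI) u)) by (apply sx_Ccos; reflexivity).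
    assert (HX4 : sx t4 = Ccos (Cmul (RtoC PI) v)) by (apply sx_Ccos; reflexivity).
    assert (HX3n : Ccos (Cmul (RtoC PI) u) <> Czero) by (rewrite <- HX3; apply sx_nz; auto).
    assert (HX4n : Ccos (Cmul (RtoC PI) v) <> Czero) by (rewrite <- HX4; apply sx_nz; auto).
    pose proof (Ccos_prod (a * pi / (RtoC 2 * b)) (c * pi / (RtoC 2 * b))) as P1.
    replace (Cadd (a * pi / (RtoC 2 * b)) (c * pi / (RtoC 2 * b))) with (Cmul (RtoC PI) u) in P1
      by (unfold pi, u; rewrite RtoC2; field; split; auto).
    replace (Csub (a * pi / (RtoC 2 * b)) (c * pi / (RtoC 2 * b))) with (Cmul (RtoC PI) v) in P1
      by (unfold pi, v; rewrite RtoC2; field; split; auto).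
    pose proof (Ccos_prod (Cmul (RtoC PI) u) (Cmul (RtoC PI) v)) as P2.
    replace (Cadd (Cmul (RtoC PI) u) (Cmul (RtoC PI) v)) with (a * pi / b) in P2
      by (unfold pi, u, v; rewrite RtoC2; field; split; auto).
    replace (Csub (Cmul (RtoC PI) u) (Cmul (RtoC PI) v)) with (c * pi / b) in P2
      by (unfold pi, u, v; rewrite RtoC2; field; split; auto).
    assert (HCC : Ccos (a * pi / (RtoC 2 * b)) * Ccos (c * pi / (RtoC 2 * b)) =
                  (Ccos (Cmul (RtoC PI) u) + Ccos (Cmul (RtoC PI) v)) / RtoC 2).
    { rewrite <- P1. rewrite RtoC2. field. auto. }
    assert (HDEN : Ccos (c * pi / b) + Ccos (a * pi / b) = RtoC 2 * (Ccos (Cmul (RtoC PI) u) * Ccos (Cmul (RtoC PI) v))).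
    { rewrite P2. ring. }
    match goal with |- Cseries_to _ ?T =>
      replace T with (Cmul kap (Csub (Cadd (Csub (Csub (Cdiv (RtoC PI) (sx t3)) be3) be3)
                  (Csub (Cdiv (RtoC PI) (sx t4)) be4)) be4)) end.
    exact HL.
    rewrite HCC, HDEN, HX3, HX4, HK. unfold pi.
    assert (HD : D <> Czero).
    { unfold D. change (b ^ 3) with (b * (b * (b * Cone))). change (a ^ 3) with (a * (a * (a * Cone))).
      apply (nz_scale _ (b * b - a * a + c * c) (a * b)). intro E; apply Cmul_integral in E; tauto. auto. ring. }
    rewrite RtoC4, RtoC2. field. repeat split; nz.
Qed.
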